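(* Let $D=\mathrm{diag}(d_1,\dots,d_n)$ be a complex diagonal matrix and let $X\in\mathbb{C}^{n\times n}$. Then for every $k=1,\dots,n$, \[ \prod_{j=1}^k\sigma_j(X^*DX)\le\prod_{j=1}^k\sigma_j(X^*|D|X), \] where $|D|=\mathrm{diag}(|d_1|,\dots,|d_n|)$.
   Context: For a matrix $Y$, $\sigma_1(Y)\ge\sigma_2(Y)\ge\cdots\ge\sigma_n(Y)$ denote its singular values in nonincreasing order. $X^*$ is the conjugate transpose of $X$, and $|D|=(D^*D)^{1/2}$. *)

(* Defs.v *)
From HB Require Import structures.
From mathcomp Require Import all_boot all_order all_algebra.
Set Implicit Arguments. Unset Strict Implicit. Unset Printing Implicit Defensive.
Import Order.TTheory GRing.Theory Num.Theory.
Local Open Scope ring_scope.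

(* Complex matrices are taken over an arbitrary numeric algebraically closed
   field C (e.g. the complex numbers, or algC); conjugation is Num.conj. *)

Definition adjmx (C : numClosedFieldType) (m n : nat) (X : 'M[C]_(m, n)) : 'M[C]_(n, m) :=
  (map_mx Num.conj X)^T.

Definition eigvals (C : numClosedFieldType) (n : nat) (A : 'M[C]_n) : seq C :=
  sval (closed_field_poly_normal (char_poly A)).

Definition sigmas (C : numClosedFieldType) (n : nat) (Y : 'M[C]_n) : seq C :=
  map sqrtC (sort (fun x y : C => y <= x) (eigvals (adjmx Y *m Y))).

(* sigma Y j = sigma_{j+1}(Y) (0-based index) *)
Definition sigma (C : numClosedFieldType) (n : nat) (Y : 'M[C]_n) (j : nat) : C :=
  nth 0 (sigmas Y) j.

(* Main.v *)
Require Import Defs.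
From HB Require Import structures.
From mathcomp Require Import all_boot all_order all_algebra all_fingroup.
Import Order.TTheory GRing.Theory Num.Theory.
Local Open Scope ring_scope.
Set Implicit Arguments. Unset Strict Implicit. Unset Printing Implicit Defensive.

Section Basics.
Variable C : numClosedFieldType.

Lemma adjmxK m n (M : 'M[C]_(m, n)) : adjmx (adjmx M) = M.
Proof.
by apply/matrixP=> i j; rewrite /adjmx !mxE conjCK.
Qed.

Lemma adjmxM m n p (A : 'M[C]_(m, n)) (B : 'M[C]_(n, p)) :
  adjmx (A *m B) = adjmx B *m adjmx A.
Proof. by rewrite /adjmx map_mxM trmx_mul. Qed.

Lemma adjmxD m n (A B : 'M[C]_(m, n)) : adjmx (A + B) = adjmx A + adjmx B.
Proof. by rewrite /adjmx map_mxD linearD. Qed.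

Lemma adjmx1 n : adjmx (1%:M : 'M[C]_n) = 1%:M.
Proof. by rewrite /adjmx map_mx1 trmx1. Qed.

Lemma adjmx_diag n (d : 'rV[C]_n) : adjmx (diag_mx d) = diag_mx (map_mx Num.conj d).
Proof. by rewrite /adjmx map_diag_mx tr_diag_mx. Qed.

Lemma adjmx_diag_real n (d : 'rV[C]_n) : (forall i, d 0 i \is Num.real) ->
  adjmx (diag_mx d) = diag_mx d.
Proof.
move=> Hd; rewrite adjmx_diag; congr diag_mx; apply/matrixP=> i j.
by rewrite ord1 mxE; apply/CrealP.
Qed.

Lemma det_adjmx n (M : 'M[C]_n) : \det (adjmx M) = (\det M)^*.
Proof. by rewrite /adjmx det_tr det_map_mx. Qed.

Lemma adjmx_perm n (s : {perm 'I_n}) : adjmx (perm_mx s : 'M[C]_n) = perm_mx s^-1.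
Proof. by rewrite /adjmx map_perm_mx tr_perm_mx. Qed.

Lemma adjmxE m n (M : 'M[C]_(m, n)) : adjmx M = map_mx Num.conj (M^T).
Proof. by rewrite /adjmx map_trmx. Qed.

Lemma dot_self n (x : 'rV[C]_n) : (x *m adjmx x) 0 0 = \sum_i `|x 0 i| ^+ 2.
Proof.
by rewrite !mxE; apply: eq_bigr => i _; rewrite !mxE normCK.
Qed.

Lemma dot_self_ge0 n (x : 'rV[C]_n) : 0 <= (x *m adjmx x) 0 0.
Proof. by rewrite dot_self; apply: sumr_ge0 => i _; rewrite exprn_ge0. Qed.

Lemma dot_self_eq0 n (x : 'rV[C]_n) : ((x *m adjmx x) 0 0 == 0) = (x == 0).
Proof.
rewrite dot_self psumr_eq0; last by move=> i _; rewrite exprn_ge0.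
apply/idP/eqP => [/allP H|->]; last first.
  by apply/allP => i _ /=; rewrite mxE normr0 expr0n eqxx.
apply/matrixP=> i j; rewrite ord1 mxE.
by have /(_ (mem_index_enum j)) := H j; rewrite sqrf_eq0 normr_eq0 => /eqP.
Qed.

Lemma unitaryC n (Q : 'M[C]_n) : Q *m adjmx Q = 1%:M -> adjmx Q *m Q = 1%:M.
Proof. exact: mulmx1C. Qed.

Lemma det_unitary n (Q : 'M[C]_n) : Q *m adjmx Q = 1%:M -> \det (adjmx Q) * \det Q = 1.
Proof.
by move=> /unitaryC HQ; rewrite -det_mulmx HQ det1.
Qed.

Lemma perm_diag n (s : {perm 'I_n}) (d : 'rV[C]_n) :
  perm_mx s *m diag_mx d *m perm_mx s^-1 = diag_mx (\row_i d 0 (s i)).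
Proof.
apply/matrixP=> i j.
rewrite -row_permE -col_permE !mxE.
by rewrite (inj_eq perm_inj).
Qed.

End Basics.


Section Eig.
Variable C : numClosedFieldType.

Lemma char_poly_unitary n (Q D : 'M[C]_n) : Q *m adjmx Q = 1%:M ->
  char_poly (adjmx Q *m D *m Q) = char_poly D.
Proof.
move=> HQ0; have HQ := unitaryC HQ0.
rewrite /char_poly /char_poly_mx.
have HX : ('X%:M : 'M[{poly C}]_n) =
   map_mx polyC (adjmx Q) *m 'X%:M *m map_mx polyC Q.
  by rewrite scalar_mxC -mulmxA -map_mxM HQ map_mx1 mulmx1.
rewrite {1}HX !map_mxM -mulmxBl -mulmxBr !det_mulmx mulrC mulrA -det_mulmx.
by rewrite -map_mxM HQ0 map_mx1 det1 mul1r.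
Qed.

Definition rseq n (d : 'rV[C]_n) := [seq d 0 i | i <- enum 'I_n].

Lemma eigvals_unitary n (Q : 'M[C]_n) (d : 'rV[C]_n) : Q *m adjmx Q = 1%:M ->
  perm_eq (eigvals (adjmx Q *m diag_mx d *m Q)) (rseq d).
Proof.
move=> HQ; rewrite /eigvals; case: closed_field_poly_normal => r /=.
rewrite char_poly_unitary // (monicP (char_poly_monic _)) scale1r.
rewrite char_poly_trig ?diag_mx_is_trig // => Hr.
apply: prod_XsubC_eq; rewrite -Hr /rseq big_map big_enum /=.
by apply: eq_bigr => i _; rewrite mxE eqxx mulr1n.
Qed.

End Eig.


Lemma mktupleE' n T (f : 'I_n -> T) : val [tuple f i | i < n] = [seq f i | i <- enum 'I_n].
Proof. by rewrite -val_ord_tuple. Qed.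

Section Spec.
Variable C : numClosedFieldType.
Notation gec := (fun x y : C => y <= x).

Lemma sort_gec_eq (s t : seq C) : perm_eq s t -> all (fun x => x \is Num.real) t ->
  sorted gec t -> sort gec s = t.
Proof.
move=> Hst Ht St.
have Hs : all (fun x => x \is Num.real) s by rewrite (perm_all _ Hst).
apply: (@sorted_eq _ gec).
- by move=> y x z /= H1 H2; apply: le_trans H2 H1.
- by move=> x y /andP[H1 H2]; apply/le_anti; rewrite H1 H2.
- apply: (sort_sorted_in (P := fun x : C => x \is Num.real)) => //.
  by move=> x y Hx Hy /=; rewrite orbC; apply: real_leVge.
- done.
by apply: perm_trans Hst; rewrite perm_sort.
Qed.

Lemma quad_entry p n (Z : 'M[C]_(p, n)) (X : 'M[C]_n) i :
  (Z *m X *m adjmx Z) i i = (row i Z *m X *m adjmx (row i Z)) 0 0.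
Proof.
rewrite !mxE; apply: eq_bigr => k _; rewrite !mxE; congr (_ * _).
by apply: eq_bigr => l _; rewrite !mxE.
Qed.

Lemma gram_quad_ge0 p m n (Z : 'M[C]_(p, n)) (M : 'M[C]_(m, n)) i :
  0 <= (Z *m (adjmx M *m M) *m adjmx Z) i i.
Proof.
rewrite quad_entry.
have -> : row i Z *m (adjmx M *m M) *m adjmx (row i Z) =
  (row i Z *m adjmx M) *m adjmx (row i Z *m adjmx M).
  by rewrite adjmxM adjmxK !mulmxA.
exact: dot_self_ge0.
Qed.

Lemma gram_spec m n (M : 'M[C]_(m, n)) : exists (Q : 'M[C]_n) (l : 'rV[C]_n),
  [/\ Q *m adjmx Q = 1%:M, adjmx M *m M = adjmx Q *m diag_mx l *m Q,
      (forall i, 0 <= l 0 i) & sorted gec (rseq l)].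
Proof.
set H := adjmx M *m M.
have HH : adjmx H = H by rewrite /H adjmxM adjmxK.
have Hn : H \is normalmx.
  apply/normalmxP; rewrite -adjmxE HH //.
have := @orthomx_spectralP _ _ H; rewrite Hn => /(_ isT).
set P := spectralmx H; set sp := spectral_diag H => HP.
have PU : P *m adjmx P = 1%:M.
  by rewrite adjmxE; apply/unitarymxP; apply: spectral_unitarymx.
rewrite invmx_unitary ?spectral_unitarymx // -adjmxE in HP.
have Hsp : forall i, 0 <= sp 0 i.
  move=> i; have := gram_quad_ge0 P M i; rewrite -/H HP !mulmxA PU mul1mx.
  by rewrite -mulmxA PU mulmx1 mxE eqxx mulr1n.
have /tuple_permP [s Hs] : perm_eq (sort gec (rseq sp)) [tuple sp 0 i | i < n].
  by rewrite perm_sort /rseq mktupleE'.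
exists (perm_mx s *m P), (\row_i sp 0 (s i)); split.
- rewrite adjmxM adjmx_perm mulmxA -[_ *m P *m _]mulmxA PU mulmx1.
  by rewrite -perm_mxM mulgV perm_mx1.
- have Hps : perm_mx s^-1 *m perm_mx s = 1%:M :> 'M[C]_n.
    by rewrite -perm_mxM mulVg perm_mx1.
  rewrite -/H HP adjmxM adjmx_perm -perm_diag !mulmxA.
  by rewrite -!(mulmxA _ (perm_mx s^-1) (perm_mx s)) Hps !mulmx1.
- by move=> i; rewrite mxE.
have -> : rseq (\row_i sp 0 (s i)) = sort gec (rseq sp).
  rewrite Hs /rseq mktupleE'; apply: eq_map => i /=.
  by rewrite mxE tnth_mktuple.
apply: (sort_sorted_in (P := fun x : C => x \is Num.real)).
  by move=> x y Hx Hy /=; rewrite orbC; apply: real_leVge.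
by apply/allP => x /mapP [i _ ->]; apply: ger0_real.
Qed.

End Spec.


Section Util.
Variable C : numClosedFieldType.
Notation gec := (fun x y : C => y <= x).

Lemma nth_rseq n (l : 'rV[C]_n) (i : 'I_n) : nth 0 (rseq l) i = l 0 i.
Proof.
rewrite /rseq (nth_map i) ?size_enum_ord ?ltn_ord //.
by rewrite nth_ord_enum.
Qed.

Lemma sorted_rseq n (l : 'rV[C]_n) : sorted gec (rseq l) ->
  forall i j : 'I_n, (i <= j)%N -> l 0 j <= l 0 i.
Proof.
move=> Hs i j Hij.
have Htr : transitive gec by move=> y x z /= H1 H2; apply: le_trans H2 H1.
have := @sorted_leq_nth _ gec Htr (fun x => le_refl x) 0 _ Hs i j.
rewrite !nth_rseq; apply => //; rewrite inE /rseq size_map size_enum_ord ltn_ord //.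
Qed.

Lemma rseq_real n (l : 'rV[C]_n) : (forall i, 0 <= l 0 i) ->
  all (fun x => x \is Num.real) (rseq l).
Proof. by move=> H; apply/allP => x /mapP [i _ ->]; apply: ger0_real. Qed.

Lemma sigma_eq n (Y Q : 'M[C]_n) (l : 'rV[C]_n) :
  Q *m adjmx Q = 1%:M -> adjmx Y *m Y = adjmx Q *m diag_mx l *m Q ->
  (forall i, 0 <= l 0 i) -> sorted gec (rseq l) ->
  forall j : 'I_n, sigma Y j = sqrtC (l 0 j).
Proof.
move=> HQ HY Hl Hs j.
rewrite /sigma /sigmas /eigvals HY.
have := sort_gec_eq (eigvals_unitary l HQ) (rseq_real Hl) Hs.
rewrite /eigvals => ->.
by rewrite (nth_map 0) ?nth_rseq // /rseq size_map size_enum_ord.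
Qed.

Lemma quad_diag n (c d : 'rV[C]_n) :
  (c *m diag_mx d *m adjmx c) 0 0 = \sum_i d 0 i * `|c 0 i| ^+ 2.
Proof.
rewrite mul_mx_diag !mxE; apply: eq_bigr => i _.
by rewrite !mxE normCK mulrAC mulrC mulrA.
Qed.

Lemma rv_pid n r (a : 'rV[C]_n) (i : 'I_n) :
  (a *m pid_mx r) 0 i = if (i < r)%N then a 0 i else 0.
Proof.
rewrite mxE (bigD1 i) //= big1 ?addr0.
  by rewrite mxE eqxx /=; case: ifP => _; rewrite ?mulr1 ?mulr0.
move=> l Hl; rewrite mxE; case: eqP => [/val_inj Eli|_]; last by rewrite mulr0.
by rewrite Eli eqxx in Hl.
Qed.

Lemma rv_copid n r (a : 'rV[C]_n) (i : 'I_n) :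
  (a *m copid_mx r) 0 i = if (i < r)%N then 0 else a 0 i.
Proof.
rewrite /copid_mx mulmxBr mulmx1 [LHS]mxE [X in _ + X]mxE rv_pid.
by case: ifP => _; rewrite ?subrr ?subr0.
Qed.

Lemma det_spec n (Q : 'M[C]_n) (l : 'rV[C]_n) : Q *m adjmx Q = 1%:M ->
  \det (adjmx Q *m diag_mx l *m Q) = \prod_i l 0 i.
Proof.
move=> HQ; rewrite !det_mulmx det_diag mulrC mulrA.
by rewrite [\det Q * _]mulrC det_unitary // mul1r.
Qed.

Lemma gram_det_ge0 k n (Y : 'M[C]_(k, n)) : 0 <= \det (Y *m adjmx Y).
Proof.
have [Q [l [HQ HY Hl _]]] := gram_spec (adjmx Y).
rewrite adjmxK in HY; rewrite HY det_spec //.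
by apply: prodr_ge0 => i _.
Qed.

Lemma adjmx_pid k n : adjmx (pid_mx k : 'M[C]_(k, n)) = pid_mx k.
Proof. by rewrite /adjmx map_pid_mx tr_pid_mx. Qed.

End Util.


Section D2.
Variable C : numClosedFieldType.

Lemma adjmx_row_mx m n1 n2 (A : 'M[C]_(m, n1)) (B : 'M[C]_(m, n2)) :
  adjmx (row_mx A B) = col_mx (adjmx A) (adjmx B).
Proof. by rewrite /adjmx map_row_mx tr_row_mx. Qed.

Lemma det_conjug n (K S : 'M[C]_n) :
  \det (adjmx K *m S *m K) = `|\det K| ^+ 2 * \det S.
Proof.
by rewrite !det_mulmx det_adjmx normCKC mulrAC.
Qed.

Lemma det_add_gram k n (Y R : 'M[C]_(k, n)) :
  \det (Y *m adjmx Y) <= \det (Y *m adjmx Y + R *m adjmx R).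
Proof.
set S := Y *m adjmx Y; set T := R *m adjmx R.
have HST : S + T = row_mx Y R *m adjmx (row_mx Y R).
  by rewrite adjmx_row_mx mul_row_col.
have [->|HS] := eqVneq (\det S) 0; first by rewrite HST gram_det_ge0.
have [Q [l [HQ HSQ Hl _]]] := gram_spec (adjmx Y).
rewrite adjmxK -/S in HSQ.
have Hl0 : forall i, l 0 i != 0.
  move: HS; rewrite HSQ det_spec // => /prodf_neq0 H i; exact: H.
set sl := \row_i sqrtC (l 0 i).
have slr : forall i, sl 0 i \is Num.real by move=> i; rewrite mxE sqrtC_real.
set L := diag_mx sl *m Q.
have HL : adjmx L *m L = S.
  rewrite HSQ /L adjmxM adjmx_diag_real // !mulmxA -[_ *m diag_mx sl *m diag_mx sl]mulmxA.
  rewrite mulmx_diag; congr (_ *m diag_mx _ *m _); apply/matrixP => i j.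
  by rewrite !mxE -expr2 sqrtCK ord1.
have Lu : L \in unitmx.
  rewrite unitmxE /L det_mulmx det_diag unitfE mulf_neq0 //.
    by apply/prodf_neq0 => i _; rewrite mxE sqrtC_eq0.
  by apply/eqP => HQ0; have := det_unitary HQ; rewrite HQ0 mulr0 => /eqP; rewrite eq_sym oner_eq0.
set K := invmx L.
have HK1 : adjmx K *m S *m K = 1%:M.
  rewrite -HL; transitivity (adjmx (L *m K) *m (L *m K)).
    by rewrite adjmxM !mulmxA.
  by rewrite mulmxV // adjmx1 mulmx1.
set N := adjmx R *m K.
have HK2 : adjmx K *m T *m K = adjmx N *m N.
  by rewrite /N adjmxM adjmxK !mulmxA.
have [Q2 [mu [HQ2 HN Hmu _]]] := gram_spec N.
have HKST : adjmx K *m (S + T) *m K =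
    adjmx Q2 *m diag_mx (\row_i (1 + mu 0 i)) *m Q2.
  rewrite mulmxDr mulmxDl HK1 HK2 HN.
  have -> : diag_mx (\row_i (1 + mu 0 i)) = 1%:M + diag_mx mu.
    apply/matrixP => i j; rewrite !mxE.
    by case: eqP => _; rewrite ?mulr1n ?mulr0n ?addr0.
  by rewrite mulmxDr mulmxDl mulmx1 unitaryC.
have Hge1 : 1 <= \det (adjmx K *m (S + T) *m K).
  rewrite HKST det_spec //.
  apply: le_trans (_ : \prod_(i < k) (1 : C) <= _); first by rewrite big1.
  apply: ler_prod => i _; rewrite ler01 mxE lerDl; exact: Hmu.
have E1 : 1 = `|\det K| ^+ 2 * \det S by rewrite -det_conjug HK1 det1.
move: Hge1; rewrite det_conjug {1}E1.
have HKp : 0 < `|\det K| ^+ 2.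
  rewrite exprn_gt0 // normr_gt0 /K det_inv invr_eq0.
  by move: Lu; rewrite unitmxE unitfE.
by rewrite ler_pM2l.
Qed.

End D2.


Section CS.
Variable C : numClosedFieldType.

Lemma adjmx0 m n : adjmx (0 : 'M[C]_(m, n)) = 0.
Proof. by rewrite /adjmx map_mx0 trmx0. Qed.

Lemma det_CS k n (Y Z : 'M[C]_(k, n)) :
  `|\det (Y *m adjmx Z)| ^+ 2 <= \det (Y *m adjmx Y) * \det (Z *m adjmx Z).
Proof.
set S := Y *m adjmx Y.
have HS0 : 0 <= \det S := gram_det_ge0 Y.
have HZ0 := gram_det_ge0 Z.
have [HS|HS] := eqVneq (\det S) 0.
  have /det0P [x xn0 Hx] : \det S == 0 by apply/eqP.
  have xY0 : x *m Y = 0.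
    apply/eqP; rewrite -dot_self_eq0 adjmxM !mulmxA -[x *m Y *m adjmx Y]mulmxA.
    by rewrite -/S Hx mul0mx mxE.
  have /eqP -> : \det (Y *m adjmx Z) == 0.
    by apply/det0P; exists x => //; rewrite mulmxA xY0 mul0mx.
  by rewrite normr0 expr0n /= mulr_ge0.
have Su : S \in unitmx by rewrite unitmxE unitfE.
set G := Z *m adjmx Y *m invmx S.
set R := Z - G *m Y.
have RY : R *m adjmx Y = 0.
  by rewrite /R mulmxBl -mulmxA -/S /G mulmxKV // subrr.
have YR : Y *m adjmx R = 0 by rewrite -[Y]adjmxK -adjmxM RY adjmx0.
have EZ : Z = G *m Y + R by rewrite /R addrC subrK.
have HYZ : Y *m adjmx Z = S *m adjmx G.
  by rewrite [in LHS]EZ adjmxD mulmxDr YR addr0 adjmxM mulmxA.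
have HZZ : Z *m adjmx Z = (G *m Y) *m adjmx (G *m Y) + R *m adjmx R.
  rewrite [in LHS]EZ adjmxD mulmxDl !mulmxDr.
  rewrite -[G *m Y *m adjmx R]mulmxA YR mulmx0 addr0.
  have -> : R *m adjmx (G *m Y) = 0 by rewrite adjmxM mulmxA RY mul0mx.
  by rewrite add0r.
have HGS : (G *m Y) *m adjmx (G *m Y) = adjmx (adjmx G) *m S *m adjmx G.
  by rewrite adjmxK adjmxM !mulmxA.
have HD := det_add_gram (G *m Y) R.
rewrite -HZZ HGS det_conjug det_adjmx norm_conjC in HD.
rewrite HYZ det_mulmx det_adjmx normrM norm_conjC exprMn ger0_norm //.
rewrite expr2 -mulrA [_ * (_ ^+ 2)]mulrC.
exact: ler_wpM2l.
Qed.

End CS.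


Section Interlace.
Variable C : numClosedFieldType.
Notation gec := (fun x y : C => y <= x).

Lemma row_free_iso k n (V : 'M[C]_(k, n)) : V *m adjmx V = 1%:M -> row_free V.
Proof.
move=> HV; rewrite /row_free mxrank_unitary //.
by apply/unitarymxP; rewrite -adjmxE.
Qed.

Lemma interlace k n (hk : (k <= n)%N) (B Q : 'M[C]_n) (l : 'rV[C]_n)
    (V : 'M[C]_(k, n)) (R : 'M[C]_k) (mu : 'rV[C]_k) :
  Q *m adjmx Q = 1%:M -> B = adjmx Q *m diag_mx l *m Q -> sorted gec (rseq l) ->
  V *m adjmx V = 1%:M -> R *m adjmx R = 1%:M ->
  V *m B *m adjmx V = adjmx R *m diag_mx mu *m R -> sorted gec (rseq mu) ->
  forall j : 'I_k, mu 0 j <= l 0 (widen_ord hk j).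
Proof.
move=> HQ HB Hl HV HR HVB Hmu j.
set RV := R *m V.
have RVu : RV *m adjmx RV = 1%:M.
  by rewrite /RV adjmxM mulmxA -[R *m V *m _]mulmxA HV mulmx1.
have HRV : RV *m B *m adjmx RV = diag_mx mu.
  have -> : RV *m B *m adjmx RV = R *m (V *m B *m adjmx V) *m adjmx R.
    by rewrite /RV adjmxM !mulmxA.
  by rewrite HVB !mulmxA HR mul1mx -mulmxA HR mulmx1.
have HQB : Q *m B *m adjmx Q = diag_mx l.
  by rewrite HB !mulmxA HQ mul1mx -mulmxA HQ mulmx1.
have hjk : (j.+1 <= k)%N := ltn_ord j.
have hjn : (j <= n)%N by apply: leq_trans (ltnW hjk) hk.
set S1 : 'M[C]_(k, n) := pid_mx j.+1 *m RV.
set S2 : 'M[C]_n := copid_mx j *m Q.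
have rS1 : \rank S1 = j.+1.
  by rewrite /S1 mxrankMfree ?row_free_iso // rank_pid_mx.
have rS2 : \rank S2 = (n - j)%N.
  by rewrite /S2 mxrankMfree ?row_free_iso // rank_copid_mx.
have rcap : (0 < \rank (S1 :&: S2)%MS)%N.
  have := mxrank_sum_cap S1 S2; rewrite rS1 rS2.
  have := rank_leq_col (S1 + S2)%MS.
  move: (\rank (S1 + S2)%MS) (\rank (S1 :&: S2)%MS) => a b Ha Hab.
  rewrite addSn subnKC // in Hab.
  rewrite lt0n; apply/eqP => Hb; rewrite Hb addn0 in Hab.
  by move: Ha; rewrite Hab ltnn.
set x := nz_row (S1 :&: S2)%MS.
have xn0 : x != 0 by rewrite /x nz_row_eq0 -mxrank_eq0 -lt0n.
have xS1 : (x <= S1)%MS := submx_trans (nz_row_sub _) (capmxSl _ _).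
have xS2 : (x <= S2)%MS := submx_trans (nz_row_sub _) (capmxSr _ _).
have [a Ha] := submxP xS1.
have [b Hb] := submxP xS2.
pose a' := a *m (pid_mx j.+1 : 'M[C]_k).
pose b' := b *m (copid_mx j : 'M[C]_n).
have Hxa : x = a' *m RV by rewrite Ha /S1 mulmxA.
have Hxb : x = b' *m Q by rewrite Hb /S2 mulmxA.
set xBx := (x *m B *m adjmx x) 0 0.
set xx := (x *m adjmx x) 0 0.
have xxa : xx = \sum_i `|a' 0 i| ^+ 2.
  rewrite /xx Hxa adjmxM mulmxA -[a' *m RV *m _]mulmxA RVu mulmx1.
  exact: dot_self.
have xxb : xx = \sum_i `|b' 0 i| ^+ 2.
  rewrite /xx Hxb adjmxM mulmxA -[b' *m Q *m _]mulmxA HQ mulmx1.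
  exact: dot_self.
have xBa : xBx = \sum_i mu 0 i * `|a' 0 i| ^+ 2.
  rewrite /xBx; have -> : x *m B *m adjmx x = a' *m (RV *m B *m adjmx RV) *m adjmx a'.
    by rewrite Hxa adjmxM !mulmxA.
  by rewrite HRV quad_diag.
have xBb : xBx = \sum_i l 0 i * `|b' 0 i| ^+ 2.
  rewrite /xBx; have -> : x *m B *m adjmx x = b' *m (Q *m B *m adjmx Q) *m adjmx b'.
    by rewrite Hxb adjmxM !mulmxA.
  by rewrite HQB quad_diag.
have low : mu 0 j * xx <= xBx.
  rewrite xxa xBa mulr_sumr; apply: ler_sum => i _.
  rewrite /a' rv_pid; case: ifP => Hi; last by rewrite normr0 expr0n /= !mulr0.
  apply: ler_wpM2r; first exact: exprn_ge0.
  by apply: sorted_rseq.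
have up : xBx <= l 0 (widen_ord hk j) * xx.
  rewrite xxb xBb mulr_sumr; apply: ler_sum => i _.
  rewrite /b' rv_copid; case: ifP => Hi; first by rewrite normr0 expr0n /= !mulr0.
  apply: ler_wpM2r; first exact: exprn_ge0.
  by apply: sorted_rseq => //; rewrite /= leqNgt Hi.
have xxp : 0 < xx by rewrite lt_def dot_self_eq0 xn0 dot_self_ge0.
by rewrite -(ler_pM2r xxp); apply: le_trans up.
Qed.

Lemma kyfan k n (hk : (k <= n)%N) m (P : 'M[C]_(m, n)) (Q : 'M[C]_n) (l : 'rV[C]_n)
    (V : 'M[C]_(k, n)) :
  Q *m adjmx Q = 1%:M -> adjmx P *m P = adjmx Q *m diag_mx l *m Q ->
  sorted gec (rseq l) -> V *m adjmx V = 1%:M ->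
  \det (V *m (adjmx P *m P) *m adjmx V) <= \prod_(j < k) l 0 (widen_ord hk j).
Proof.
move=> HQ HP Hl HV.
have [R [mu [HR HN Hmu Hsmu]]] := gram_spec (P *m adjmx V).
have E : V *m (adjmx P *m P) *m adjmx V = adjmx R *m diag_mx mu *m R.
  by rewrite -HN adjmxM adjmxK !mulmxA.
rewrite E det_spec //; apply: ler_prod => j _; rewrite Hmu /=.
apply: (interlace hk HQ HP Hl HV HR _ Hsmu).
by rewrite -E.
Qed.

End Interlace.


Section SVD.
Variable C : numClosedFieldType.
Notation gec := (fun x y : C => y <= x).

Lemma rowsub_quad k n p (f : 'I_k -> 'I_n) (Z : 'M[C]_(n, p)) (X : 'M[C]_p) :
  rowsub f Z *m X *m adjmx (rowsub f Z) = mxsub f f (Z *m X *m adjmx Z).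
Proof.
apply/matrixP => i j; rewrite !mxE; apply: eq_bigr => l _; rewrite !mxE.
by congr (_ * _); apply: eq_bigr => r _; rewrite !mxE.
Qed.

Lemma sigma_psd n (Q : 'M[C]_n) (l : 'rV[C]_n) :
  Q *m adjmx Q = 1%:M -> (forall i, 0 <= l 0 i) -> sorted gec (rseq l) ->
  forall j : 'I_n, sigma (adjmx Q *m diag_mx l *m Q) j = l 0 j.
Proof.
move=> HQ Hl Hs j.
set B := adjmx Q *m diag_mx l *m Q.
have lr : forall i, l 0 i \is Num.real by move=> i; apply: ger0_real.
have HBB : adjmx B *m B = adjmx Q *m diag_mx (\row_i (l 0 i ^+ 2)) *m Q.
  rewrite /B !adjmxM adjmxK adjmx_diag_real // !mulmxA.
  rewrite -[adjmx Q *m diag_mx l *m Q *m adjmx Q]mulmxA HQ mulmx1.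
  rewrite -[adjmx Q *m diag_mx l *m diag_mx l]mulmxA mulmx_diag.
  by congr (_ *m diag_mx _ *m _); apply/matrixP => i k; rewrite !mxE expr2.
rewrite (sigma_eq HQ HBB) ?mxE ?sqrCK //.
  by move=> i; rewrite mxE exprn_ge0.
have -> : rseq (\row_i (l 0 i ^+ 2)) = [seq x ^+ 2 | x <- rseq l].
  by rewrite /rseq; elim: (enum _) => //= a s ->; rewrite mxE.
rewrite sorted_map.
apply: (sub_in_sorted (P := fun x : C => 0 <= x)) Hs.
  by move=> x y Hx Hy /= Hxy; rewrite ler_pXn2r.
by apply/allP => x /mapP [i _ ->].
Qed.

Lemma svd_k k n (hk : (k <= n)%N) (A Q : 'M[C]_n) (l : 'rV[C]_n) :
  Q *m adjmx Q = 1%:M -> adjmx A *m A = adjmx Q *m diag_mx l *m Q ->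
  (forall j : 'I_k, 0 < l 0 (widen_ord hk j)) ->
  exists W V : 'M[C]_(k, n), [/\ V *m adjmx V = 1%:M, W *m adjmx W = 1%:M &
    W *m A *m adjmx V = diag_mx (\row_j sqrtC (l 0 (widen_ord hk j)))].
Proof.
move=> HQ HA Hl.
set f := widen_ord hk.
have finj : injective f by move=> a b /(congr1 val) H; apply: val_inj.
set V := rowsub f Q.
have Hsub : forall X : 'M[C]_n, V *m X *m adjmx V = mxsub f f (Q *m X *m adjmx Q).
  by move=> X; rewrite rowsub_quad.
have HV : V *m adjmx V = 1%:M.
  have -> : V *m adjmx V = V *m 1%:M *m adjmx V by rewrite mulmx1.
  rewrite Hsub mulmx1 HQ.
  by apply/matrixP => i j; rewrite !mxE (inj_eq finj).
have HVA : V *m (adjmx A *m A) *m adjmx V = diag_mx (\row_j l 0 (f j)).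
  rewrite Hsub HA !mulmxA HQ mul1mx -mulmxA HQ mulmx1.
  by apply/matrixP => i j; rewrite !mxE (inj_eq finj).
set s := \row_j sqrtC (l 0 (f j)).
set si := \row_j (sqrtC (l 0 (f j)))^-1.
have sin0 : forall j, sqrtC (l 0 (f j)) != 0.
  by move=> j; rewrite sqrtC_eq0; apply: lt0r_neq0.
have sir : forall j, si 0 j \is Num.real.
  by move=> j; rewrite mxE realV sqrtC_real // ltW.
exists (diag_mx si *m V *m adjmx A), V; split => //.
  rewrite !adjmxM adjmxK adjmx_diag_real // !mulmxA.
  have -> : diag_mx si *m V *m adjmx A *m A *m adjmx V *m diag_mx si =
     diag_mx si *m (V *m (adjmx A *m A) *m adjmx V) *m diag_mx si by rewrite !mulmxA.
  rewrite HVA mulmx_diag mulmx_diag.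
  rewrite -diag_const_mx; congr diag_mx; apply/matrixP => i j; rewrite !mxE.
  move: (sin0 j) (sqrtCK (l 0 (f j))); set t := sqrtC _ => tn0 <-.
  by rewrite expr2 mulrA mulVf // mul1r mulfV.
have -> : diag_mx si *m V *m adjmx A *m A *m adjmx V =
   diag_mx si *m (V *m (adjmx A *m A) *m adjmx V) by rewrite !mulmxA.
rewrite HVA mulmx_diag; congr diag_mx.
apply/matrixP => i j; rewrite !mxE.
move: (sin0 j) (sqrtCK (l 0 (f j))); set t := sqrtC _ => tn0 <-.
by rewrite expr2 mulrA mulVf // mul1r.
Qed.

End SVD.

Unset Implicit Arguments. Set Strict Implicit. Set Printing Implicit Defensive.

Theorem lemma2p1 (C : numClosedFieldType) (n : nat) (d : 'rV[C]_n)
    (X : 'M[C]_n) (k : nat) :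
  (1 <= k <= n)%N ->
  \prod_(j < k) sigma (adjmx X *m diag_mx d *m X) j
    <= \prod_(j < k) sigma (adjmx X *m diag_mx (map_mx (fun z : C => `|z|) d) *m X) j.
Proof.
move=> /andP [_ hk].
set e := \row_i sqrtC `|d 0 i|.
set u := \row_i (if d 0 i == 0 then 1 else d 0 i / `|d 0 i|).
have er : forall i, e 0 i \is Num.real by move=> i; rewrite mxE sqrtC_real.
have Hd : diag_mx d = diag_mx e *m diag_mx u *m diag_mx e.
  rewrite !mulmx_diag; congr diag_mx; apply/matrixP => i j; rewrite ord1 !mxE.
  rewrite mulrAC -expr2 sqrtCK; case: eqP => [->|/eqP dn0].
    by rewrite normr0 mul0r.
  by rewrite mulrC divfK // normr_eq0.
have Habs : diag_mx (map_mx (fun z : C => `|z|) d) = diag_mx e *m diag_mx e.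
  rewrite mulmx_diag; congr diag_mx; apply/matrixP => i j.
  by rewrite ord1 !mxE -expr2 sqrtCK.
set P := diag_mx e *m X.
have HaP : adjmx P = adjmx X *m diag_mx e by rewrite adjmxM adjmx_diag_real.
have HA : adjmx X *m diag_mx d *m X = adjmx P *m diag_mx u *m P.
  by rewrite Hd HaP !mulmxA.
have HB : adjmx X *m diag_mx (map_mx (fun z : C => `|z|) d) *m X = adjmx P *m P.
  by rewrite Habs HaP !mulmxA.
rewrite HA HB.
have HU : diag_mx u *m adjmx (diag_mx u) = 1%:M.
  rewrite adjmx_diag mulmx_diag -diag_const_mx; congr diag_mx.
  apply/matrixP => i j; rewrite !mxE -normCK.
  case: eqP => [_|/eqP dn0]; first by rewrite normr1 expr1n.
  by rewrite normf_div normr_id divff ?expr1n // normr_eq0.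
set A := adjmx P *m diag_mx u *m P.
set B := adjmx P *m P.
have [QB [lB [HQB HPB HlB HsB]]] := gram_spec P.
have sB : forall j : 'I_k, sigma B j = lB 0 (widen_ord hk j).
  by move=> j; rewrite /B HPB; exact: (sigma_psd HQB HlB HsB (widen_ord hk j)).
rewrite (eq_bigr _ (fun j _ => sB j)).
have RHS0 : 0 <= \prod_(j < k) lB 0 (widen_ord hk j) by apply: prodr_ge0.
have [QA [lA [HQA HAA HlA HsA]]] := gram_spec A.
have sA : forall j : 'I_k, sigma A j = sqrtC (lA 0 (widen_ord hk j)).
  by move=> j; exact: (sigma_eq HQA HAA HlA HsA (widen_ord hk j)).
rewrite (eq_bigr _ (fun j _ => sA j)).
have [/forallP Hpos|] := boolP [forall j : 'I_k, 0 < lA 0 (widen_ord hk j)]; last first.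
  move/forallPn => [j Hj]; rewrite (bigD1 j) //=.
  have : lA 0 (widen_ord hk j) == 0.
    by move: (HlA (widen_ord hk j)); rewrite le0r (negbTE Hj) orbF.
  by move/eqP->; rewrite sqrtC0 mul0r.
have [W [V [HV HW HWA]]] := svd_k (hk := hk) HQA HAA Hpos.
set L := \prod_(j < k) sqrtC (lA 0 (widen_ord hk j)).
have HL : L = \det (W *m A *m adjmx V).
  by rewrite HWA det_diag; apply: eq_bigr => j _; rewrite mxE.
have L0 : 0 <= L by apply: prodr_ge0 => j _; rewrite sqrtC_ge0.
set Y := W *m adjmx P *m diag_mx u.
set Z := V *m adjmx P.
have HYZ : W *m A *m adjmx V = Y *m adjmx Z.
  by rewrite /Z adjmxM adjmxK /A /Y !mulmxA.
have HYY : Y *m adjmx Y = W *m B *m adjmx W.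
  transitivity (W *m adjmx P *m (diag_mx u *m adjmx (diag_mx u)) *m P *m adjmx W).
    by rewrite /Y /P !adjmxM !adjmxK !mulmxA.
  by rewrite HU mulmx1 /B !mulmxA.
have HZZ : Z *m adjmx Z = V *m B *m adjmx V by rewrite /Z adjmxM adjmxK /B !mulmxA.
have CS := det_CS Y Z.
have dY0 := gram_det_ge0 Y.
have dZ0 := gram_det_ge0 Z.
rewrite -HYZ -HL ger0_norm // in CS.
rewrite HYY in CS dY0; rewrite HZZ in CS dZ0.
have KW := kyfan hk HQB HPB HsB HW.
have KV := kyfan hk HQB HPB HsB HV.
have H2 : L ^+ 2 <= (\prod_(j < k) lB 0 (widen_ord hk j)) ^+ 2.
  apply: le_trans CS _; rewrite expr2; exact: ler_pM.
by rewrite -(ler_pXn2r (isT : (0 < 2)%N)) ?nnegrE.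
Qed.
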